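(* The construction $\mathrm{Env}$ is a functor from the category of $k$-coloured operads (with coloured operad morphisms) to the category of operads, and it preserves injections and surjections. Explicitly, the following hold. (i) For every coloured operad morphism $\phi:\mathcal C_1\to\mathcal C_2$, there is a well-defined operad morphism $\mathrm{Env}(\phi):\mathrm{Env}(\mathcal C_1)\to\mathrm{Env}(\mathcal C_2)$ determined by $\mathrm{Env}(\phi)(\mathfrak c(x))=\mathfrak c(\phi(x))$ for $x\in\mathcal C_1^+$. (ii) $\mathrm{Env}(\psi\circ\phi)=\mathrm{Env}(\psi)\circ\mathrm{Env}(\phi)$, and $\mathrm{Env}(\mathrm{id})=\mathrm{id}$. (iii) If $\phi$ is injective (resp. surjective), then $\mathrm{Env}(\phi)$ is injective (resp. surjective).
   Context: All operads are nonsymmetric operads in the category of sets. Fix $k\ge1$ and write $[k]=\{1,\dots,k\}$. A $k$-coloured operad $\mathcal C=\biguplus_{n\ge1}\mathcal C(n)$ assigns to each $x\in\mathcal C(n)$ an output colour $\mathrm{Out}(x)\in[k]$ and input colours $\mathrm{In}_1(x),\dots,\mathrm{In}_n(x)\in[k]$. It has partial compositions $x\circ_i y$, defined exactly when $\mathrm{Out}(y)=\mathrm{In}_i(x)$, satisfying the usual coloured operad axioms. It is assumed that $\mathcal C(1)=\{\mathbf 1_c:c\in[k]\}$ consists of units ($\mathbf 1_c$ has output and input colour $c$) and that each $\mathcal C(n)$ is finite. An operad is a $1$-coloured operad. A coloured operad morphism $\phi:\mathcal C_1\to\mathcal C_2$ between $k$-coloured operads is a map that preserves arities and commutes with the composition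 maps. Moreover, whenever $x\circ_i y$ is defined in $\mathcal C_1$, the composition $\phi(x)\circ_i\phi(y)$ is required to be defined in $\mathcal C_2$. Let $\mathcal C^+=\mathcal C\setminus\mathcal C(1)$. The enveloping operad $\mathrm{Env}(\mathcal C)$ is the quotient of the free uncoloured operad generated by the elements of $\mathcal C^+$ (colours forgotten, $x\in\mathcal C(n)$ being an $n$-ary generator) by the smallest operadic congruence $\equiv$ with $\mathfrak c(x)\circ_i\mathfrak c(y)\equiv\mathfrak c(x\circ_i y)$ whenever $x\circ_i y$ is defined in $\mathcal C$. Here $\mathfrak c(x)$ is the corolla (one-internal-node syntax tree) labelled $x$, and we also write $\mathfrak c(x)$ for its class. *)

(* Defs.v *)
From mathcomp Require Import all_boot.
Set Implicit Arguments.
Unset Strict Implicit.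
Unset Printing Implicit Defensive.

(* k-coloured nonsymmetric operads in Set, non-dependent presentation. *)
(* Elements live in one carrier type with an arity function; input    *)
(* positions are numbered 1..ar x as in the paper; comp x i y is the   *)
(* partial composition x o_i y, which is Some _ exactly when defined.  *)
(* list membership for arbitrary (non-eq) types *)
Fixpoint inlist (T : Type) (x : T) (s : seq T) : Prop :=
  match s with nil => False | cons y s' => y = x \/ inlist x s' end.

Record coloperad (k : nat) := ColOperad {
  carrier :> Type;
  ar : carrier -> nat;
  out : carrier -> 'I_k;
  inc : carrier -> nat -> 'I_k;
  comp : carrier -> nat -> carrier -> option carrier;
  unit : 'I_k -> carrier;
  ar_pos : forall x, 0 < ar x;
  ar_fin : forall n, exists s : seq carrier, forall x, ar x = n -> inlist x s;
  unit_ar : forall c, ar (unit c) = 1;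
  unit_out : forall c, out (unit c) = c;
  unit_inc : forall c, inc (unit c) 1 = c;
  ar1_unit : forall x, ar x = 1 -> exists c, x = unit c;
  compP : forall x i y,
    (exists z, comp x i y = Some z) <-> (1 <= i <= ar x /\ out y = inc x i);
  comp_ar : forall x i y z, comp x i y = Some z -> ar z = ar x + ar y - 1;
  comp_out : forall x i y z, comp x i y = Some z -> out z = out x;
  comp_inc : forall x i y z, comp x i y = Some z ->
    forall j, 1 <= j <= ar z ->
      inc z j = if j < i then inc x j
                else if j < i + ar y then inc y (j - i + 1)
                else inc x (j - ar y + 1);
  comp_unitl : forall x, comp (unit (out x)) 1 x = Some x;
  comp_unitr : forall x i, 1 <= i <= ar x -> comp x i (unit (inc x i)) = Some x;
  comp_seq : forall x y z i j, 1 <= i <= ar x -> 1 <= j <= ar y ->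
    obind (fun xy => comp xy (i + j - 1) z) (comp x i y)
    = obind (fun yz => comp x i yz) (comp y j z);
  comp_par : forall x y z i j, 1 <= i -> i < j -> j <= ar x ->
    obind (fun xy => comp xy (j + ar y - 1) z) (comp x i y)
    = obind (fun xz => comp xz i y) (comp x j z)
}.

Arguments ar {k C} _ : rename.
Arguments out {k C} _ : rename.
Arguments inc {k C} _ _ : rename.
Arguments comp {k C} _ _ _ : rename.

Definition colmorph k (C1 C2 : coloperad k) (f : C1 -> C2) : Prop :=
  (forall x : C1, ar (f x) = ar x) /\
  (forall (x y z : C1) i, comp x i y = Some z -> comp (f x) i (f y) = Some (f z)).

(* Free (uncoloured) nonsymmetric operad: planar syntax trees.         *)
(* Leaf is the unit; Node x ts is an internal node labelled x.         *)
Inductive tree (E : Type) : Type :=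
| Leaf : tree E
| Node : E -> list (tree E) -> tree E.
Arguments Leaf {E}.

Fixpoint leaves E (t : tree E) : nat :=
  match t with
  | Leaf => 1
  | Node _ ts => (fix g (l : list (tree E)) : nat :=
                    match l with nil => 0 | cons u l' => leaves u + g l' end) ts
  end.

(* well-formed trees over the generators C^+ (elements of arity >= 2) *)
Fixpoint wf k (C : coloperad k) (t : tree C) : bool :=
  match t with
  | Leaf => true
  | Node x ts => [&& size ts == ar x, 1 < ar x &
                    (fix g (l : list (tree C)) : bool :=
                       match l with nil => true | cons u l' => wf u && g l' end) ts]
  end.

Fixpoint graft E (t : tree E) (i : nat) (s : tree E) : tree E :=
  match t with
  | Leaf => if i == 1 then s else Leaf
  | Node x ts =>
      Node x ((fix g (l : list (tree E)) (i : nat) : list (tree E) :=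
                 match l with
                 | nil => nil
                 | cons u l' => if i <= leaves u then cons (graft u i s) l'
                                else cons u (g l' (i - leaves u))
                 end) ts i)
  end.

Definition corolla k (C : coloperad k) (x : C) : tree C := Node x (nseq (ar x) Leaf).

Fixpoint tmap E F (f : E -> F) (t : tree E) : tree F :=
  match t with
  | Leaf => Leaf
  | Node x ts => Node (f x) (map (tmap f) ts)
  end.

(* The congruence defining Env(C): smallest operadic congruence on the
   free operad (well-formed trees) with c(x) o_i c(y) == c(x o_i y). *)
Inductive envc k (C : coloperad k) : tree C -> tree C -> Prop :=
| envc_gen : forall (x y z : C) i, 1 < ar x -> 1 < ar y -> comp x i y = Some z ->
    envc (graft (corolla x) i (corolla y)) (corolla z)
| envc_refl : forall t, wf t -> envc t t
| envc_sym : forall t t', envc t t' -> envc t' t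
| envc_trans : forall t t' t'', envc t t' -> envc t' t'' -> envc t t''
| envc_ctx : forall t t' s s' i, envc t t' -> envc s s' -> 1 <= i <= leaves t ->
    envc (graft t i s) (graft t' i s').

(* Env(C) is the setoid (well-formed trees, envc).  An operad morphism
   Env(C1) -> Env(C2) is a map on representatives which is well defined
   on classes, preserves arity, and commutes with partial composition. *)
Definition env_morph k (C1 C2 : coloperad k) (F : tree C1 -> tree C2) : Prop :=
  (forall t, wf t -> wf (F t) /\ leaves (F t) = leaves t) /\
  (forall t t', envc t t' -> envc (F t) (F t')) /\
  (forall t s i, wf t -> wf s -> 1 <= i <= leaves t ->
      envc (F (graft t i s)) (graft (F t) i (F s))).

Definition env_injective k (C1 C2 : coloperad k) (F : tree C1 -> tree C2) : Prop :=
  forall t t', wf t -> wf t' -> envc (F t) (F t') -> envc t t'.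

Definition env_surjective k (C1 C2 : coloperad k) (F : tree C1 -> tree C2) : Prop :=
  forall s, wf s -> exists t, wf t /\ envc (F t) s.

Definition Env_map k (C1 C2 : coloperad k) (f : C1 -> C2) : tree C1 -> tree C2 :=
  tmap f.

(* Main.v *)
Require Import Defs.
From mathcomp Require Import all_boot zify.
Set Implicit Arguments. Unset Strict Implicit. Unset Printing Implicit Defensive.

Definition graftl E (s : tree E) := fix g (l : list (tree E)) (i : nat) : list (tree E) :=
  match l with
  | nil => nil
  | cons u l' => if i <= leaves u then cons (graft u i s) l'
                 else cons u (g l' (i - leaves u))
  end.
Lemma graft_node E (x : E) ts i s : graft (Node x ts) i s = Node x (graftl s ts i).
Proof. by []. Qed.
Lemma graft_leaf E i (s : tree E) : graft Leaf i s = if i == 1 then s else Leaf.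
Proof. by []. Qed.
Definition leavesl E (l : seq (tree E)) := sumn (map (@leaves E) l).
Lemma leaves_node E (x : E) ts : leaves (Node x ts) = leavesl ts.
Proof. rewrite /leavesl; elim: ts => [|t ts IH] //=. rewrite -IH. by []. Qed.
Lemma wf_node k (C : coloperad k) (x : C) ts :
  wf (Node x ts) = [&& size ts == ar x, 1 < ar x & all (@wf k C) ts].
Proof. by []. Qed.
Lemma leavesl_cat E (l1 l2 : seq (tree E)) : leavesl (l1 ++ l2) = leavesl l1 + leavesl l2.
Proof. by rewrite /leavesl map_cat sumn_cat. Qed.
Lemma leavesl_cons E (u : tree E) l : leavesl (u :: l) = leaves u + leavesl l.
Proof. by []. Qed.
Lemma leavesl_nil E : leavesl (@nil (tree E)) = 0.
Proof. by []. Qed.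
Lemma leavesl_nseq E n : leavesl (nseq n (@Leaf E)) = n.
Proof. by elim: n => //= n IH; rewrite leavesl_cons IH. Qed.
Lemma leavesl_rcons E (l : seq (tree E)) u : leavesl (rcons l u) = leavesl l + leaves u.
Proof. by rewrite -cats1 leavesl_cat leavesl_cons leavesl_nil addn0. Qed.

Definition allT E (P : tree E -> Prop) (l : seq (tree E)) : Prop :=
  foldr (fun u acc => P u /\ acc) True l.
Fixpoint tree_ind2 E (P : tree E -> Prop) (HL : P Leaf)
  (HN : forall x ts, allT P ts -> P (Node x ts)) (t : tree E) : P t :=
  match t with
  | Leaf => HL
  | Node x ts => HN x ts ((fix g (l : seq (tree E)) : allT P l :=
        match l return allT P l with nil => I | cons u l' => conj (tree_ind2 HL HN u) (g l') end) ts)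
  end.

Lemma size_graftl E (s : tree E) l i : size (graftl s l i) = size l.
Proof. by elim: l i => //= u l IH i; case: ifP => //= _; rewrite IH. Qed.

Lemma graftl_head E (s : tree E) u l i : i <= leaves u -> graftl s (u :: l) i = graft u i s :: l.
Proof. by move=> h /=; rewrite h. Qed.
Lemma graftl_tail E (s : tree E) u l i : leaves u < i ->
  graftl s (u :: l) i = u :: graftl s l (i - leaves u).
Proof. by move=> h /=; rewrite leqNgt h. Qed.

Lemma graftl_cat E (s : tree E) l1 l2 i : 0 < i ->
  graftl s (l1 ++ l2) i = if i <= leavesl l1 then graftl s l1 i ++ l2
                          else l1 ++ graftl s l2 (i - leavesl l1).
Proof.
elim: l1 i => [|u l1 IH] i hi /=; first by rewrite leqn0 (gtn_eqF hi) subn0.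
rewrite leavesl_cons; case: (leqP i (leaves u)) => h1.
  by rewrite ifT //; lia.
rewrite IH; last by lia.
case: (leqP (i - leaves u) (leavesl l1)) => h2.
  by rewrite ifT //; lia.
by rewrite ifF ?subnDA //; lia.
Qed.

Lemma graftl_mid E (s : tree E) ps u qs j : 0 < j <= leaves u ->
  graftl s (ps ++ u :: qs) (leavesl ps + j) = ps ++ graft u j s :: qs.
Proof.
move=> /andP[h1 h2]; rewrite graftl_cat; last by lia.
by rewrite ifF; [rewrite addKn graftl_head | lia].
Qed.

Lemma graft_out E (t s : tree E) i : (i == 0) || (leaves t < i) -> graft t i s = t.
Proof.
elim/tree_ind2: t i => [|x ts IH] i.
  by rewrite graft_leaf; case: i => [|[|i]].
rewrite graft_node leaves_node => h; congr Node.
elim: ts IH i h => [|u l IHl] //= IH i h.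
case: IH => IHu IHr; rewrite leavesl_cons in h.
case: (leqP i (leaves u)) => h1.
  rewrite IHu //; lia.
rewrite IHl //; lia.
Qed.

Lemma graft_leaves E (t s : tree E) i : 0 < i <= leaves t ->
  leaves (graft t i s) = leaves t + leaves s - 1.
Proof.
elim/tree_ind2: t i => [|x ts IH] i.
  by rewrite graft_leaf /=; case: i => [|[|i]] //= _; lia.
rewrite graft_node !leaves_node.
elim: ts IH i => [|u l IHl] /= IH i h; first by rewrite leavesl_nil in h; lia.
case: IH => IHu IHr; rewrite leavesl_cons in h.
case: (leqP i (leaves u)) => h1.
  rewrite !leavesl_cons IHu; lia.
rewrite !leavesl_cons IHl //; lia.
Qed.

Lemma graft_leaves_ge E (t s : tree E) i : 0 < leaves s -> leaves t <= leaves (graft t i s).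
Proof.
move=> hs; case: (boolP ((i == 0) || (leaves t < i))) => h.
  by rewrite graft_out.
rewrite graft_leaves; lia.
Qed.

Lemma all_graftl k (C : coloperad k) (s : tree C) l i :
  allT (fun t => forall i, wf t -> wf s -> wf (graft t i s)) l ->
  all (@wf k C) l -> wf s -> all (@wf k C) (graftl s l i).
Proof.
elim: l i => [|u l IHl] //= i [IHu IHr] /andP[hu hl] hs.
case: ifP => _ /=; first by rewrite IHu.
by rewrite hu IHl.
Qed.

Lemma graft_wf k (C : coloperad k) (t s : tree C) i : wf t -> wf s -> wf (graft t i s).
Proof.
elim/tree_ind2: t i => [|x ts IH] i.
  by rewrite graft_leaf; case: eqP.
rewrite graft_node !wf_node size_graftl => /and3P[h1 h2 h3] hs.
by rewrite h1 h2 all_graftl.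
Qed.


Lemma wf_leaves_ge k (C : coloperad k) (t : tree C) : wf t -> 0 < leaves t /\
  (forall x ts, t = Node x ts -> 1 < leaves t).
Proof.
elim/tree_ind2: t => [|x ts IH]; first by split => // x ts.
rewrite wf_node leaves_node => /and3P[/eqP h1 h2 h3].
have: size ts <= leavesl ts.
  elim: ts IH h3 {h1} => [|u l IHl] //= [IHu IHr] /andP[hu hl].
  rewrite leavesl_cons; have := IHl IHr hl; have := (IHu hu).1; lia.
move=> h; split; [|move=> ? ? _]; lia.
Qed.

Lemma wf_leaves_pos k (C : coloperad k) (t : tree C) : wf t -> 0 < leaves t.
Proof. by move=> h; case: (wf_leaves_ge h). Qed.

Lemma wf_leaves1 k (C : coloperad k) (t : tree C) : wf t -> leaves t = 1 -> t = Leaf.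
Proof.
case: t => [|x ts] // h1 h2; have [_ h] := wf_leaves_ge h1.
by have := h x ts erefl; rewrite h2.
Qed.

Lemma tmap_node E F (f : E -> F) x ts : tmap f (Node x ts) = Node (f x) (map (tmap f) ts).
Proof. by []. Qed.
Lemma leaves_tmap E F (f : E -> F) t : leaves (tmap f t) = leaves t.
Proof.
elim/tree_ind2: t => [|x ts IH] //.
rewrite tmap_node !leaves_node.
elim: ts IH => [|u l IHl] //= [IHu IHr].
by rewrite !leavesl_cons IHu IHl.
Qed.


Lemma tmap_graft E F (f : E -> F) t i s : tmap f (graft t i s) = graft (tmap f t) i (tmap f s).
Proof.
elim/tree_ind2: t i => [|x ts IH] i.
  by rewrite !graft_leaf; case: eqP.
rewrite graft_node !tmap_node graft_node; congr Node.
elim: ts IH i => [|u l IHl] //= [IHu IHr] i.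
rewrite leaves_tmap; case: ifP => _ /=; first by rewrite IHu.
by rewrite IHl.
Qed.

Lemma wf_tmap k (C1 C2 : coloperad k) (f : C1 -> C2) :
  (forall x, ar (f x) = ar x) -> forall t, wf t -> wf (tmap f t).
Proof.
move=> har; elim/tree_ind2 => [|x ts IH] //.
rewrite tmap_node !wf_node size_map har => /and3P[-> -> h3] /=.
elim: ts IH h3 => [|u l IHl] //= [IHu IHr] /andP[hu hl].
by rewrite IHu // IHl.
Qed.

Lemma tmap_comp E F G (f : E -> F) (g : F -> G) t :
  tmap (fun x => g (f x)) t = tmap g (tmap f t).
Proof.
elim/tree_ind2: t => [|x ts IH] //; rewrite !tmap_node; congr Node.
elim: ts IH => [|u l IHl] //= [IHu IHr]; by rewrite IHu IHl.
Qed.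

Lemma tmap_id E (t : tree E) : tmap (fun x => x) t = t.
Proof.
elim/tree_ind2: t => [|x ts IH] //; rewrite !tmap_node; congr Node.
elim: ts IH => [|u l IHl] //= [IHu IHr]; by rewrite IHu IHl.
Qed.

Lemma tmap_inj E F (f : E -> F) : (forall x y, f x = f y -> x = y) ->
  forall t t', tmap f t = tmap f t' -> t = t'.
Proof.
move=> finj; elim/tree_ind2 => [|x ts IH] [|y ts'] //.
rewrite !tmap_node => -[/finj -> h]; congr Node.
elim: ts IH ts' h => [|u l IHl] IH [|u' l'] //= [h1 h2].
case: IH => IHu IHr; by rewrite (IHu _ h1) (IHl IHr _ h2).
Qed.

Lemma tmap_corolla k (C1 C2 : coloperad k) (f : C1 -> C2) :
  (forall x, ar (f x) = ar x) -> forall x, tmap f (corolla x) = corolla (f x).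
Proof. by move=> har x; rewrite /corolla tmap_node har map_nseq. Qed.

Fixpoint gall E (a : tree E) (i : nat) (cs : seq (tree E)) : tree E :=
  match cs with nil => a | cons c cs' => graft (gall a i.+1 cs') i c end.

Lemma gall_leaves_ge k (C : coloperad k) (a : tree C) i cs :
  all (@wf k C) cs -> leaves a <= leaves (gall a i cs).
Proof.
elim: cs i => [|c cs IH] i //= /andP[hc hcs].
apply: leq_trans (IH i.+1 hcs) _; apply: graft_leaves_ge; exact: wf_leaves_pos.
Qed.

Lemma LG E (x : E) cs pre post :
  gall (Node x (pre ++ nseq (size cs) Leaf ++ post)) (leavesl pre).+1 cs = Node x (pre ++ cs ++ post).
Proof.
elim: cs pre => [|c cs IH] pre //=.
have := IH (rcons pre Leaf); rewrite leavesl_rcons /= addn1 cat_rcons => ->.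
by rewrite graft_node -addn1 cat_rcons graftl_mid.
Qed.

Lemma LD k (C : coloperad k) (x : C) d cs pre post j : 0 < j -> j + size cs <= leaves d + 1 ->
  all (@wf k C) cs ->
  gall (Node x (pre ++ d :: post)) (leavesl pre + j) cs = Node x (pre ++ gall d j cs :: post).
Proof.
elim: cs j => [|c cs IH] j //= hj hs /andP[hc hcs].
rewrite -addnS IH //; last by lia.
rewrite graft_node graftl_mid //.
have := gall_leaves_ge d j.+1 hcs; lia.
Qed.

Lemma gall_wf k (C : coloperad k) (a : tree C) i cs : wf a -> all (@wf k C) cs -> wf (gall a i cs).
Proof.
elim: cs i => [|c cs IH] i //= ha /andP[hc hcs]; exact: graft_wf (IH _ ha hcs) hc.
Qed.

Lemma comp_def k (C : coloperad k) (x y z : C) i :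
  Defs.comp x i y = Some z -> 0 < i <= ar x /\ out y = inc x i.
Proof. move=> h; apply/(compP x i y); by exists z. Qed.

Lemma wf_corolla k (C : coloperad k) (x : C) : 1 < ar x -> wf (corolla x).
Proof. by move=> h; rewrite /corolla wf_node size_nseq eqxx h /=; elim: (ar x). Qed.

Lemma leaves_corolla k (C : coloperad k) (x : C) : leaves (corolla x) = ar x.
Proof. by rewrite /corolla leaves_node leavesl_nseq. Qed.

Lemma envc_wf k (C : coloperad k) (t t' : tree C) : envc t t' ->
  [/\ wf t, wf t' & leaves t = leaves t'].
Proof.
elim => {t t'}.
- move=> x y z i hx hy hc; have [hi _] := comp_def hc.
  have hz := comp_ar hc.
  split; first by apply: graft_wf; apply: wf_corolla.
    by apply: wf_corolla; lia.
  by rewrite graft_leaves !leaves_corolla ?hz //; rewrite leaves_corolla.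
- by move=> t h.
- by move=> t t' _ [h1 h2 h3].
- by move=> t t' t'' _ [h1 h2 h3] _ [h4 h5 h6]; split => //; rewrite h3.
- move=> t t' s s' i _ [h1 h2 h3] _ [h4 h5 h6] hi.
  split; try exact: graft_wf.
  by rewrite !graft_leaves -?h3 ?h6.
Qed.

Lemma GC k (C : coloperad k) (a a' : tree C) i cs : envc a a' -> 0 < i ->
  i + size cs <= leaves a + 1 -> all (@wf k C) cs -> envc (gall a i cs) (gall a' i cs).
Proof.
move=> haa; elim: cs i => [|c cs IH] i //= hi hs /andP[hc hcs].
apply: envc_ctx; first (apply: IH => //; lia).
  exact: envc_refl.
have := gall_leaves_ge a i.+1 hcs; lia.
Qed.

Fixpoint allT2 E (R : tree E -> tree E -> Prop) (l l' : seq (tree E)) : Prop :=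
  match l, l' with
  | nil, nil => True
  | cons u l, cons u' l' => R u u' /\ allT2 R l l'
  | _, _ => False
  end.

Lemma GCL k (C : coloperad k) (a : tree C) i cs cs' : wf a -> 0 < i ->
  i + size cs <= leaves a + 1 -> allT2 (@envc k C) cs cs' -> envc (gall a i cs) (gall a i cs').
Proof.
move=> ha; elim: cs cs' i => [|c cs IH] [|c' cs'] i //=.
  by move=> *; exact: envc_refl.
move=> hi hs [hc hcs].
have hw: all (@wf k C) cs.
  elim: cs cs' hcs {IH hs} => [|u l IHl] [|u' l'] //= [h1 h2].
  by have [-> _ _] := envc_wf h1; rewrite (IHl _ h2).
apply: envc_ctx => //; first (apply: IH => //; lia).
have := gall_leaves_ge a i.+1 hw; lia.
Qed.

Lemma FG k (C1 C2 : coloperad k) (F : tree C1 -> tree C2) (a : tree C1) i cs :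
  env_morph F -> wf a -> 0 < i -> i + size cs <= leaves a + 1 -> all (@wf k C1) cs ->
  envc (F (gall a i cs)) (gall (F a) i (map F cs)).
Proof.
move=> [hF1 [hF2 hF3]] ha; elim: cs i => [|c cs IH] i /= hi hs.
  by move=> _; apply: envc_refl; case: (hF1 a ha).
move=> /andP[hc hcs].
have hg := gall_wf i.+1 ha hcs.
have hl := gall_leaves_ge a i.+1 hcs.
apply: envc_trans; first apply: hF3 => //; first by lia.
apply: envc_ctx; first (apply: IH => //; lia).
  by apply: envc_refl; case: (hF1 c hc).
by case: (hF1 _ hg) => _ ->; lia.
Qed.

Definition stepA k (C : coloperad k) (st : C * seq (tree C)) (c : tree C) : C * seq (tree C) :=
  let: (z, acc) := st in
  match c with
  | Node y us => match Defs.comp z (size acc).+1 y with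
                 | Some z' => (z', acc ++ us)
                 | None => (z, rcons acc c) end
  | Leaf => (z, rcons acc c)
  end.

Definition nf k (C : coloperad k) := fix nf (t : tree C) : tree C :=
  match t with
  | Leaf => Leaf
  | Node x ts => let st := foldl (@stepA k C) (x, [::]) (map nf ts) in Node st.1 st.2
  end.

Lemma nf_node k (C : coloperad k) (x : C) ts :
  nf (Node x ts) = let st := foldl (@stepA k C) (x, [::]) (map (@nf k C) ts) in Node st.1 st.2.
Proof. by []. Qed.

Inductive step k (C : coloperad k) : tree C -> tree C -> Prop :=
| st_root : forall (x y z : C) ps us qs, Defs.comp x (size ps).+1 y = Some z ->
    step (Node x (ps ++ Node y us :: qs)) (Node z (ps ++ us ++ qs))
| st_child : forall (x : C) ps c c' qs, step c c' ->
    step (Node x (ps ++ c :: qs)) (Node x (ps ++ c' :: qs)).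

Inductive star k (C : coloperad k) : tree C -> tree C -> Prop :=
| star_refl : forall t, star t t
| star_step : forall t t' t'', step t t' -> star t' t'' -> star t t''.

Lemma step_leaves k (C : coloperad k) (t t' : tree C) : step t t' -> leaves t' = leaves t.
Proof.
elim => {t t'}.
  by move=> x y z ps us qs _; rewrite !leaves_node !leavesl_cat !leavesl_cons leaves_node.
by move=> x ps c c' qs _ IH; rewrite !leaves_node !leavesl_cat !leavesl_cons IH.
Qed.

Lemma step_wf k (C : coloperad k) (t t' : tree C) : step t t' -> wf t -> wf t'.
Proof.
elim => {t t'}.
  move=> x y z ps us qs hc; rewrite !wf_node !size_cat !all_cat.
  move=> /and3P[/eqP h1 h2 /andP[hp /andP[hy hq]]].
  move: hy; rewrite wf_node => /and3P[/eqP h3 h4 hu].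
  have hz := comp_ar hc; simpl in h1.
  apply/and3P; split; [apply/eqP; lia|lia|].
  by rewrite hp hu.
move=> x ps c c' qs _ IH; rewrite !wf_node !size_cat !all_cat /=.
by move=> /and3P[-> -> /andP[-> /andP[/IH -> ->]]].
Qed.

Lemma step_graft k (C : coloperad k) (t t' : tree C) i s : step t t' -> 0 < i <= leaves t ->
  step (graft t i s) (graft t' i s).
Proof.
move=> hst; elim: hst i => {t t'}.
  move=> x y z ps us qs hc i; rewrite leaves_node !leavesl_cat leavesl_cons leaves_node => hi.
  rewrite !graft_node (graftl_cat _ ps (Node y us :: qs)) ?(graftl_cat _ ps (us ++ qs)); try lia.
  case: (leqP i (leavesl ps)) => h1.
    by apply: st_root; rewrite size_graftl.
  rewrite graftl_cat; last lia.
  case: (leqP (i - leavesl ps) (leavesl us)) => h2.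
    rewrite graftl_head ?leaves_node // graft_node.
    exact: st_root.
  rewrite graftl_tail ?leaves_node //.
  exact: st_root.
move=> x ps c c' qs hst IH i; rewrite leaves_node !leavesl_cat leavesl_cons => hi.
have hl := step_leaves hst.
rewrite !graft_node !(graftl_cat _ ps); try lia.
case: (leqP i (leavesl ps)) => h1; first by apply: st_child.
case: (leqP (i - leavesl ps) (leaves c)) => h2.
  rewrite graftl_head // graftl_head ?hl //; apply: st_child; apply: IH; lia.
by rewrite graftl_tail // graftl_tail ?hl //; apply: st_child.
Qed.

Lemma star_trans k (C : coloperad k) (t t' t'' : tree C) : star t t' -> star t' t'' -> star t t''.
Proof. elim => // a b c h _ IH /IH; exact: star_step. Qed.

Lemma star_leaves k (C : coloperad k) (t t' : tree C) : star t t' -> leaves t' = leaves t.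
Proof. by elim => // a b c /step_leaves h _ ->. Qed.

Lemma star_wf k (C : coloperad k) (t t' : tree C) : star t t' -> wf t -> wf t'.
Proof. by elim => // a b c /step_wf h _ IH /h /IH. Qed.

Lemma star_graft k (C : coloperad k) (t t' : tree C) i s : star t t' -> 0 < i <= leaves t ->
  star (graft t i s) (graft t' i s).
Proof.
elim => [a|a b c h _ IH] hi; first exact: star_refl.
apply: star_step (step_graft s h hi) (IH _); by rewrite (step_leaves h).
Qed.

Lemma star_child k (C : coloperad k) (x : C) ps c c' qs : star c c' ->
  star (Node x (ps ++ c :: qs)) (Node x (ps ++ c' :: qs)).
Proof.
elim => [a|a b d h _ IH]; first exact: star_refl.
exact: star_step (st_child x ps qs h) IH.
Qed.

Lemma gall_node_nil E (y : E) us : gall (Node y (nseq (size us) Leaf)) 1 us = Node y us.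
Proof. by have := LG y us [::] [::]; rewrite /= !cats0. Qed.

Lemma step_envc k (C : coloperad k) (t t' : tree C) : step t t' -> wf t -> envc t t'.
Proof.
elim => {t t'}; last first.
  move=> x ps c c' qs hst IH.
  rewrite wf_node all_cat => /and3P[h1 h2 /andP[hp /andP[hc hq]]].
  have e : forall d, Node x (ps ++ d :: qs) = graft (Node x (ps ++ Leaf :: qs)) (leavesl ps + 1) d.
    by move=> d; rewrite graft_node graftl_mid.
  rewrite (e c) (e c'); apply: envc_ctx; last by rewrite leaves_node leavesl_cat leavesl_cons /=; lia.
    apply: envc_refl; rewrite wf_node all_cat size_cat /= -(size_cat ps (c :: qs)) h1 h2.
    by rewrite hp.
  exact: IH.
move=> x y z ps us qs hc.
rewrite wf_node all_cat size_cat => /and3P[/eqP h1 h2 /andP[hp /andP[hy hq]]].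
move: hy; rewrite wf_node => /and3P[/eqP h3 h4 hu].
simpl in h1.
set a := size ps; set b := size qs; set ny := ar y.
have hz := comp_ar hc.
have eG : graft (corolla x) a.+1 (corolla y) = Node x (nseq a Leaf ++ corolla y :: nseq b Leaf).
  rewrite /corolla -[ar x](_ : a + (1 + b) = _); last by lia.
  rewrite nseqD add1n graft_node -[a.+1]addn1 /=.
  by have := @graftl_mid C (Node y (nseq (ar y) Leaf)) (nseq a Leaf) Leaf (nseq b Leaf) 1 erefl;
    rewrite leavesl_nseq => ->.
have eZ : corolla z = Node z (nseq a Leaf ++ nseq ny Leaf ++ nseq b Leaf).
  by rewrite /corolla -!nseqD; congr Node; congr nseq; lia.
have e1 : Node x (ps ++ Node y us :: qs) = gall (Node x (ps ++ corolla y :: qs)) (leavesl ps).+1 us.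
  rewrite -addn1 LD //; last by rewrite leaves_corolla h3 addnC.
  by rewrite /corolla -h3 gall_node_nil.
have e2 : forall w (rest : seq (tree C)), Node w (ps ++ rest) = gall (Node w (nseq a Leaf ++ rest)) 1 ps.
  by move=> w rest; have := LG w ps [::] rest.
have e3 : Node x (nseq a Leaf ++ corolla y :: qs) =
          gall (graft (corolla x) a.+1 (corolla y)) (a + ny).+1 qs.
  rewrite eG; have := LG x qs (rcons (nseq a Leaf) (corolla y)) [::].
  by rewrite !cats0 leavesl_rcons leavesl_nseq leaves_corolla !cat_rcons.
have e4 : Node z (nseq a Leaf ++ nseq ny Leaf ++ qs) = gall (corolla z) (a + ny).+1 qs.
  rewrite eZ; have := LG z qs (nseq a Leaf ++ nseq ny Leaf) [::].
  by rewrite !cats0 leavesl_cat !leavesl_nseq -!catA.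
have e5 : Node z (ps ++ us ++ qs) = gall (Node z (ps ++ nseq ny Leaf ++ qs)) (leavesl ps).+1 us.
  by rewrite /ny -h3 LG.
have hw := wf_leaves_pos.
rewrite e1 e5 e2 e3 e2 e4.
have hG : envc (graft (corolla x) a.+1 (corolla y)) (corolla z).
  by apply: envc_gen => //; lia.
have H1 : envc (gall (graft (corolla x) a.+1 (corolla y)) (a + ny).+1 qs)
               (gall (corolla z) (a + ny).+1 qs).
  apply: GC => //; try exact hq.
  rewrite eG leaves_node leavesl_cat leavesl_cons !leavesl_nseq leaves_corolla; lia.
have H2 : envc (gall (gall (graft (corolla x) a.+1 (corolla y)) (a + ny).+1 qs) 1 ps)
               (gall (gall (corolla z) (a + ny).+1 qs) 1 ps).
  apply: GC => //.
  rewrite -e3 leaves_node leavesl_cat leavesl_cons !leavesl_nseq leaves_corolla; lia.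
apply: GC => //.
rewrite -e3 -e2 leaves_node leavesl_cat leavesl_cons leaves_corolla.
have: size us <= leavesl us.
  elim: (us) hu => [|u l IHl] //= /andP[hu' hl']; rewrite leavesl_cons.
  have := hw _ _ _ hu'; have := IHl hl'; lia.
lia.
Qed.

Lemma star_envc k (C : coloperad k) (t t' : tree C) : star t t' -> wf t -> envc t t'.
Proof.
elim => [a ha|a b c h _ IH ha]; first exact: envc_refl.
apply: envc_trans (step_envc h ha) (IH (step_wf h ha)).
Qed.

Lemma absorb_star k (C : coloperad k) rest (z : C) acc :
  star (Node z (acc ++ rest)) (let st := foldl (@stepA k C) (z, acc) rest in Node st.1 st.2).
Proof.
elim: rest z acc => [|c rest IH] z acc /=; first by rewrite cats0; exact: star_refl.
case: c => [|y us].
  by rewrite -cat_rcons; apply: IH.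
case E: (Defs.comp z (size acc).+1 y) => [z'|].
  apply: star_step; first exact: st_root E.
  by rewrite catA; apply: IH.
by rewrite -cat_rcons; apply: IH.
Qed.

Lemma nf_star k (C : coloperad k) (t : tree C) : wf t -> star t (nf t).
Proof.
elim/tree_ind2: t => [|x ts IH]; first by move=> _; exact: star_refl.
rewrite wf_node => /and3P[_ _ hts].
rewrite nf_node; apply: star_trans; last exact: (absorb_star (map (@nf k C) ts) x [::]).
have : forall pre, star (Node x (pre ++ ts)) (Node x (pre ++ map (@nf k C) ts)).
  elim: ts IH hts => [|c l IHl] //= IH hts pre; first exact: star_refl.
  case: IH => IHc IHr; move: hts => /andP[hc hl].
  apply: star_trans; first exact: star_child (IHc hc).
  by rewrite -!cat_rcons; apply: IHl.
by move=> /(_ [::]).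
Qed.

Lemma nf_wf k (C : coloperad k) (t : tree C) : wf t -> wf (nf t) /\ leaves (nf t) = leaves t.
Proof. move=> h; have s := nf_star h; split; [exact: star_wf s h|exact: star_leaves s]. Qed.

Lemma colour_par k (C : coloperad k) (x w y xw : C) i p :
  Defs.comp x i w = Some xw -> out y = inc x p -> i < p <= ar x ->
  exists r, Defs.comp xw (p + ar w - 1) y = Some r.
Proof.
move=> h hy hp; have [hi _] := comp_def h.
have hw := ar_pos w; have har := comp_ar h.
apply/(compP xw _ y); split; first lia.
rewrite (comp_inc h); last lia.
rewrite ifF; last lia. rewrite ifF; last lia.
by rewrite hy; congr inc; lia.
Qed.

Lemma pre_fold k (C : coloperad k) (y : C) L : forall (x xy : C) p acc,
  Defs.comp x p y = Some xy -> size acc + size L + 1 = p -> all (@wf k C) L ->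
  exists z1y, Defs.comp (foldl (@stepA k C) (x, acc) L).1
                        (size (foldl (@stepA k C) (x, acc) L).2).+1 y = Some z1y /\
              foldl (@stepA k C) (xy, acc) L = (z1y, (foldl (@stepA k C) (x, acc) L).2).
Proof.
elim: L => [|c L IH] x xy p acc hxy hp /=.
  by move=> _; exists xy; rewrite addn0 addn1 in hp; rewrite hp.
move=> /andP[hc hL].
have [hpx hy] := comp_def hxy.
case: c hc hp => [|w vs] hc hp /=; simpl in hp.
  by apply: IH hxy _ hL; rewrite size_rcons; lia.
move: hc; rewrite wf_node => /and3P[/eqP hvs hw1 _].
have h1 : (size acc).+1 < p by lia.
have h2 : p <= ar x by lia.
have hpar := @comp_par k C x w y (size acc).+1 p (ltn0Sn _) h1 h2.
rewrite hxy /= in hpar.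
case E: (Defs.comp x (size acc).+1 w) => [xw|]; rewrite E /= in hpar.
  have [r hr] : exists r, Defs.comp xw (p + ar w - 1) y = Some r.
    by apply: colour_par E hy _; lia.
  rewrite -hpar hr.
  apply: IH hr _ hL; rewrite size_cat hvs; lia.
rewrite -hpar.
by apply: IH hxy _ hL; rewrite size_rcons; lia.
Qed.

Lemma mid_fold k (C : coloperad k) (w : C) p acc V : p = (size acc).+1 ->
  forall (y0 wy0 : C) u0, Defs.comp w p y0 = Some wy0 -> size u0 + size V = ar y0 ->
  all (@wf k C) V ->
  exists w'', Defs.comp w p (foldl (@stepA k C) (y0, u0) V).1 = Some w'' /\
    foldl (@stepA k C) (wy0, acc ++ u0) V = (w'', acc ++ (foldl (@stepA k C) (y0, u0) V).2).
Proof.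
move=> hp; elim: V => [|c V IH] y0 wy0 u0 hw hs /=.
  by move=> _; exists wy0.
move=> /andP[hc hV]; simpl in hs.
have [hpw hy0] := comp_def hw.
case: c hc => [|v vs] hc /=.
  by rewrite rcons_cat; apply: IH hw _ hV; rewrite size_rcons; lia.
move: hc; rewrite wf_node => /and3P[/eqP hvs hv1 _].
have h1 : 0 < p <= ar w by [].
have h2 : 0 < (size u0).+1 <= ar y0 by lia.
have hseq := @comp_seq k C w y0 v p (size u0).+1 h1 h2.
rewrite hw /= in hseq.
have epos : (size (acc ++ u0)).+1 = p + (size u0).+1 - 1 by rewrite size_cat; lia.
rewrite epos hseq.
case E: (Defs.comp y0 (size u0).+1 v) => [y0v|] /=.
  have [r hr] : exists r, Defs.comp w p y0v = Some r.
    by apply/(compP w p y0v); rewrite (comp_out E); split.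
  rewrite hr -catA; apply: IH hr _ hV.
  by rewrite size_cat (comp_ar E) hvs; have := ar_pos v; lia.
by rewrite rcons_cat; apply: IH hw _ hV; rewrite size_rcons; lia.
Qed.

Lemma root_nf k (C : coloperad k) (x y z : C) ps us qs :
  Defs.comp x (size ps).+1 y = Some z -> wf (Node x (ps ++ Node y us :: qs)) ->
  nf (Node x (ps ++ Node y us :: qs)) = nf (Node z (ps ++ us ++ qs)).
Proof.
move=> hc hwf.
have := hwf; rewrite wf_node all_cat => /and3P[_ _ /andP[hp /andP[hy hq]]].
have := hy; rewrite wf_node => /and3P[/eqP h3 _ hu].
have hmap : forall l : seq (tree C), all (@wf k C) l -> all (@wf k C) (map (@nf k C) l).
  by elim => //= t l IHl /andP[ht hl]; rewrite (nf_wf ht).1 IHl.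
rewrite !nf_node !map_cat /= !foldl_cat /=.
set NP := map (@nf k C) ps.
have hsz : size (@nil (tree C)) + size NP + 1 = (size ps).+1 by rewrite size_map addn1.
have [z1y [hz1 ez]] := @pre_fold k C y NP x z (size ps).+1 [::] hc hsz (hmap _ hp).
move: hz1 ez.
case: (foldl (@stepA k C) (x, [::]) NP) => z1 acc1 /= hz1 ->.
have hV : size (@nil (tree C)) + size (map (@nf k C) us) = ar y by rewrite size_map.
have [w'' [hw1 hw2]] := @mid_fold k C z1 (size acc1).+1 acc1 (map (@nf k C) us) erefl
   y z1y [::] hz1 hV (hmap _ hu).
rewrite cats0 in hw2; rewrite hw2.
move: hw1; case: (foldl (@stepA k C) (y, [::]) (map (@nf k C) us)) => y' us' /= hw1.
by rewrite hw1.
Qed.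

Lemma step_nf k (C : coloperad k) (t t' : tree C) : step t t' -> wf t -> nf t = nf t'.
Proof.
elim => {t t'}; first by move=> x y z ps us qs hc hw; apply: root_nf.
move=> x ps c c' qs _ IH; rewrite wf_node all_cat => /and3P[_ _ /andP[_ /andP[hc _]]].
by rewrite !nf_node !map_cat /= IH.
Qed.

Lemma star_nf k (C : coloperad k) (t t' : tree C) : star t t' -> wf t -> nf t = nf t'.
Proof.
elim => // a b c h _ IH ha; rewrite (step_nf h ha); exact: IH (step_wf h ha).
Qed.

Lemma nf_idem k (C : coloperad k) (t : tree C) : wf t -> nf (nf t) = nf t.
Proof. by move=> h; rewrite -(star_nf (nf_star h) h). Qed.

Lemma NR k (C : coloperad k) (u s : tree C) i : wf s -> nf (graft u i s) = nf (graft u i (nf s)).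
Proof.
move=> hs; elim/tree_ind2: u i => [|x ts IH] i.
  by rewrite !graft_leaf; case: eqP => // _; rewrite nf_idem.
rewrite !graft_node !nf_node.
suff -> : map (@nf k C) (graftl s ts i) = map (@nf k C) (graftl (nf s) ts i) by [].
elim: ts IH i => [|c l IHl] //= IH i; case: IH => IHc IHr.
by case: ifP => _ /=; rewrite ?IHc ?IHl.
Qed.

Lemma NG k (C : coloperad k) (t s : tree C) i : wf t -> wf s -> 0 < i <= leaves t ->
  nf (graft t i s) = nf (graft (nf t) i (nf s)).
Proof.
move=> ht hs hi.
rewrite (star_nf (star_graft s (nf_star ht) hi)); last exact: graft_wf.
exact: NR.
Qed.

Lemma graft_corolla k (C : coloperad k) (x : C) i s : 0 < i <= ar x ->
  graft (corolla x) i s = Node x (nseq i.-1 Leaf ++ s :: nseq (ar x - i) Leaf).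
Proof.
move=> hi; rewrite /corolla; set n := ar x - i.
have e : ar x = i.-1 + (1 + n) by rewrite /n; lia.
rewrite e nseqD add1n graft_node /=.
have := @graftl_mid C s (nseq i.-1 Leaf) Leaf (nseq n Leaf) 1 erefl.
by rewrite leavesl_nseq addn1 prednK //; [move=> ->|lia].
Qed.

Lemma envc_nf k (C : coloperad k) (t t' : tree C) : envc t t' -> nf t = nf t'.
Proof.
move=> h; elim: h => {t t'}.
- move=> x y z i hx hy hc; have [hi _] := comp_def hc.
  rewrite graft_corolla //.
  have -> : corolla z = Node z (nseq i.-1 Leaf ++ nseq (ar y) Leaf ++ nseq (ar x - i) Leaf).
    by rewrite /corolla -!nseqD (comp_ar hc); congr Node; congr nseq; lia.
  apply: step_nf; first by apply: st_root; rewrite size_nseq prednK //; lia.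
  rewrite -graft_corolla //; apply: graft_wf; exact: wf_corolla.
- by [].
- by move=> t t' _ ->.
- by move=> t t' t'' _ -> _ ->.
- move=> t t' s s' i h1 e1 h2 e2 hi.
  have [w1 w1' l1] := envc_wf h1; have [w2 w2' l2] := envc_wf h2.
  by rewrite NG // e1 e2 -NG // -l1.
Qed.

Lemma sigma_out k (C1 C2 : coloperad k) (f : C1 -> C2) : colmorph f ->
  forall y : C1, out (f y) = inc (f (unit C1 (out y))) 1.
Proof.
move=> [_ hf] y; have := hf _ _ _ _ (comp_unitl y).
by move/comp_def => [_ ->].
Qed.

Lemma f_unit k (C1 C2 : coloperad k) (f : C1 -> C2) : colmorph f ->
  forall c, f (unit C1 c) = unit C2 (inc (f (unit C1 c)) 1).
Proof.
move=> [har _] c; have := har (unit C1 c); rewrite unit_ar => /ar1_unit [c' ->].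
by rewrite unit_inc.
Qed.

Lemma sigma_inc k (C1 C2 : coloperad k) (f : C1 -> C2) : colmorph f ->
  forall (x : C1) i, 0 < i <= ar x -> inc (f x) i = inc (f (unit C1 (inc x i))) 1.
Proof.
move=> hm x i hi; have [_ hf] := hm.
have := hf _ _ _ _ (comp_unitr hi) => /comp_def [_ <-].
by rewrite (f_unit hm) unit_out unit_inc.
Qed.

Lemma comp_reflect k (C1 C2 : coloperad k) (f : C1 -> C2) : colmorph f ->
  (forall x y, f x = f y -> x = y) ->
  forall (x y : C1) i, Defs.comp x i y = None -> Defs.comp (f x) i (f y) = None.
Proof.
move=> hm finj x y i hn.
case E: (Defs.comp (f x) i (f y)) => [w|] //.
have [hi ho] := comp_def E.
have [har _] := hm; rewrite har in hi.
rewrite (sigma_out hm) (sigma_inc hm hi) in ho.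
have : f (unit C1 (out y)) = f (unit C1 (inc x i)) by rewrite (f_unit hm (out y)) (f_unit hm (inc x i)) ho.
move/finj => eu.
have : out y = inc x i by rewrite -(unit_out C1 (out y)) eu unit_out.
move=> hoi; have [z hz] : exists z, Defs.comp x i y = Some z by apply/compP.
by rewrite hz in hn.
Qed.

Lemma fold_tmap k (C1 C2 : coloperad k) (f : C1 -> C2) : colmorph f ->
  (forall x y, f x = f y -> x = y) -> forall L (z : C1) acc,
  foldl (@stepA k C2) (f z, map (tmap f) acc) (map (tmap f) L) =
  (f (foldl (@stepA k C1) (z, acc) L).1, map (tmap f) (foldl (@stepA k C1) (z, acc) L).2).
Proof.
move=> hm finj; elim => [|c L IH] z acc //=.
case: c => [|y us] /=.
  by rewrite -IH map_rcons.
rewrite size_map; case E: (Defs.comp z (size acc).+1 y) => [z'|].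
  by rewrite (hm.2 _ _ _ _ E) -map_cat IH.
by rewrite (comp_reflect hm finj E) -(map_rcons (tmap f) acc (Node y us)) IH.
Qed.

Lemma nf_tmap k (C1 C2 : coloperad k) (f : C1 -> C2) : colmorph f ->
  (forall x y, f x = f y -> x = y) -> forall t, nf (tmap f t) = tmap f (nf t).
Proof.
move=> hm finj; elim/tree_ind2 => [|x ts IH] //.
rewrite tmap_node !nf_node.
have -> : map (@nf k C2) (map (tmap f) ts) = map (tmap f) (map (@nf k C1) ts).
  elim: ts IH => [|c l IHl] //= [IHc IHr]; by rewrite IHc IHl.
by rewrite -[[::]]/(map (tmap f) [::]) (fold_tmap hm finj).
Qed.

Lemma envc_tmap k (C1 C2 : coloperad k) (f : C1 -> C2) : colmorph f ->
  forall t t', envc t t' -> envc (tmap f t) (tmap f t').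
Proof.
move=> hm t t' h; have [har hf] := hm; elim: h => {t t'}.
- move=> x y z i hx hy hc; rewrite tmap_graft !(tmap_corolla har).
  by apply: envc_gen; rewrite ?har //; apply: hf.
- by move=> t ht; apply: envc_refl; apply: wf_tmap.
- by move=> t t' _ h; apply: envc_sym.
- by move=> t t' t'' _ h1 _ h2; apply: envc_trans h1 h2.
- move=> t t' s s' i _ h1 _ h2 hi; rewrite !tmap_graft; apply: envc_ctx => //.
  by rewrite leaves_tmap.
Qed.

Lemma env_uniq k (C1 C2 : coloperad k) (f : C1 -> C2) : colmorph f ->
  forall F : tree C1 -> tree C2, env_morph F ->
  (forall x : C1, 1 < ar x -> envc (F (corolla x)) (corolla (f x))) ->
  forall t, wf t -> envc (F t) (Env_map f t).
Proof.
move=> hm F hF hc; have [har hf] := hm; rewrite /Env_map.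
elim/tree_ind2 => [|x ts IH].
  move=> hl; have [hw hlv] := hF.1 _ hl.
  by rewrite (wf_leaves1 hw hlv); apply: envc_refl.
move=> hw; have := hw; rewrite wf_node => /and3P[/eqP h1 h2 h3].
have e : Node x ts = gall (corolla x) 1 ts by rewrite /corolla -h1 gall_node_nil.
rewrite {1}e tmap_node.
apply: envc_trans; first apply: (FG hF) => //; first exact: wf_corolla.
  by rewrite leaves_corolla; lia.
have hwF : all (@wf k C2) (map F ts).
  by elim: (ts) h3 => //= c l IHl /andP[hc' hl]; rewrite (hF.1 _ hc').1 IHl.
apply: envc_trans; first apply: GC => //; first exact: hc.
  by rewrite size_map (hF.1 _ (wf_corolla h2)).2 leaves_corolla; lia.
rewrite -[Node _ _](_ : gall (corolla (f x)) 1 (map (tmap f) ts) = _); last first.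
  by rewrite /corolla har -h1 -(size_map (tmap f)) gall_node_nil.
apply: GCL => //.
- by apply: wf_corolla; rewrite har.
- by rewrite size_map leaves_corolla har; lia.
elim: (ts) IH h3 => //= c l IHl [IHc IHr] /andP[hc' hl]; split; [exact: IHc|exact: IHl].
Qed.

Lemma env_inj k (C1 C2 : coloperad k) (f : C1 -> C2) : colmorph f ->
  (forall x y : C1, f x = f y -> x = y) -> env_injective (Env_map f).
Proof.
move=> hm finj t t' ht ht' h; rewrite /Env_map in h.
have e : nf t = nf t'.
  apply: (tmap_inj finj); rewrite -!(nf_tmap hm finj); exact: envc_nf h.
apply: envc_trans; first exact: star_envc (nf_star ht) ht.
rewrite e; apply: envc_sym; exact: star_envc (nf_star ht') ht'.
Qed.

Lemma env_surj k (C1 C2 : coloperad k) (f : C1 -> C2) : colmorph f ->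
  (forall z : C2, exists x : C1, f x = z) -> env_surjective (Env_map f).
Proof.
move=> hm fsurj s hs; have [har _] := hm; rewrite /Env_map.
suff [t [ht e]] : exists t, wf t /\ tmap f t = s by exists t; split => //; rewrite e; apply: envc_refl.
elim/tree_ind2: s hs => [|z ts IH]; first by exists Leaf.
rewrite wf_node => /and3P[/eqP h1 h2 h3].
have [x hx] := fsurj z.
have [ts1 [hts1 e1]] : exists ts1, all (@wf k C1) ts1 /\ map (tmap f) ts1 = ts.
  elim: (ts) IH h3 {h1} => [|c l IHl] /=; first by exists [::].
  move=> [IHc IHr] /andP[hc hl].
  have [c1 [hc1 ec1]] := IHc hc; have [l1 [hl1 el1]] := IHl IHr hl.
  by exists (c1 :: l1); rewrite /= hc1 hl1 ec1 el1.
exists (Node x ts1); split; last by rewrite tmap_node hx e1.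
rewrite wf_node hts1 -har hx -h1 -e1 size_map eqxx /=.
by rewrite andbT -(size_map (tmap f)) e1 h1.
Qed.

Theorem theorem1p2 (k : nat) (hk : 0 < k) :
  (forall (C1 C2 : coloperad k) (f : C1 -> C2), colmorph f ->
     env_morph (Env_map f)
     /\ (forall x : C1, 1 < ar x -> envc (Env_map f (corolla x)) (corolla (f x)))
     /\ (forall F : tree C1 -> tree C2, env_morph F ->
           (forall x : C1, 1 < ar x -> envc (F (corolla x)) (corolla (f x))) ->
           forall t, wf t -> envc (F t) (Env_map f t)))
  /\
  (forall (C1 C2 C3 : coloperad k) (f : C1 -> C2) (g : C2 -> C3),
     colmorph f -> colmorph g ->
     forall t : tree C1, wf t ->
       envc (Env_map (fun x => g (f x)) t) (Env_map g (Env_map f t)))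
  /\
  (forall (C : coloperad k) (t : tree C), wf t ->
       envc (Env_map (fun x : C => x) t) t)
  /\
  (forall (C1 C2 : coloperad k) (f : C1 -> C2), colmorph f ->
     (forall x y : C1, f x = f y -> x = y) -> env_injective (Env_map f))
  /\
  (forall (C1 C2 : coloperad k) (f : C1 -> C2), colmorph f ->
     (forall z : C2, exists x : C1, f x = z) -> env_surjective (Env_map f)).
Proof.
split.
  move=> C1 C2 f hm; have [har hf] := hm; split; last split.
  - rewrite /Env_map; split; last split.
    + by move=> t ht; split; [exact: wf_tmap|exact: leaves_tmap].
    + exact: envc_tmap.
    + move=> t s i ht hs hi; rewrite tmap_graft; apply: envc_refl.
      by apply: graft_wf; apply: wf_tmap.
  - move=> x hx; rewrite /Env_map (tmap_corolla har); apply: envc_refl.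
    by apply: wf_corolla; rewrite har.
  - exact: env_uniq.
split.
  move=> C1 C2 C3 f g hf hg t ht; rewrite /Env_map tmap_comp; apply: envc_refl.
  by apply: wf_tmap; [exact: hg.1|apply: wf_tmap; [exact: hf.1|]].
split.
  by move=> C t ht; rewrite /Env_map tmap_id; apply: envc_refl.
split; [exact: env_inj|exact: env_surj].
Qed.
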